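(* In the common-ownership game below, suppose $\kappa_{ij}=\kappa$ for all $i\ne j$, where $\kappa\ge0$ and $2+\alpha(1-\kappa)>0$. Then every equilibrium $(\mathbf A^{\rm d},\mathbf q^{\rm d})$ with $\operatorname{rank}(\mathbf A^{\rm d})\ge2$ satisfies $$\mathbf A^{\rm d}\mathbf q^{\rm d}=\frac{\boldsymbol\beta}{1+\kappa},\qquad \mathbf q^{\rm d}=\frac{\boldsymbol\gamma}{2+\alpha(1-\kappa)},\qquad \bar s_{\boldsymbol\gamma}(\mathbf A^{\rm d})=\frac{\Big(\frac{2+\alpha(1-\kappa)}{1+\kappa}\Big)^2-\|\boldsymbol\gamma\|_2^2}{n(n-1)}.$$ Moreover, an equilibrium satisfying the first two equalities exists if and only if $r(\boldsymbol\gamma)\le\frac{2+\alpha(1-\kappa)}{1+\kappa}\le R(\boldsymbol\gamma)$.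
   Context: Model: integers $n\ge2$, $m\ge2$; $\alpha>0$, $\boldsymbol\beta\in\mathbb R^m$ with $\|\boldsymbol\beta\|_2=1$, $\boldsymbol\gamma\in\mathbb R^n$ with all $\gamma_i>0$. Firm $i$ chooses a unit vector $\mathbf a_i\in\mathbb R^m$ and $q_i\ge0$; $\mathbf A=[\mathbf a_1,\dots,\mathbf a_n]$. Standalone profit: $\Pi_i=\alpha q_i\mathbf a_i^\top(\boldsymbol\beta-\sum_{j\ne i}q_j\mathbf a_j)-(1+\alpha)q_i^2+\gamma_iq_i$. With ownership weights $\kappa_{ij}$ ($\kappa_{ii}=1$), firm $i$ maximizes $\tilde\Pi_i=\Pi_i+\sum_{j\ne i}\kappa_{ij}\Pi_j$; an equilibrium is a profile of mutual best responses. $\bar s_{\boldsymbol\gamma}(\mathbf A)=\binom n2^{-1}\sum_{1\le i<j\le n}\gamma_i\gamma_j\mathbf a_i^\top\mathbf a_j$. $R(\mathbf v)=\|\mathbf v\|_1$, $r(\mathbf v)=2\|\mathbf v\|_\infty-\|\mathbf v\|_1$. *)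

(* Defs.v *)
From HB Require Import structures.
From mathcomp Require Import all_boot all_order all_algebra.
From mathcomp Require Import reals.
Set Implicit Arguments. Unset Strict Implicit. Unset Printing Implicit Defensive.
Import Order.TTheory GRing.Theory Num.Theory.
Local Open Scope ring_scope.

Section Game.
Variables (R : realType) (m n : nat).

Definition dotc (u v : 'cV[R]_m) : R := \sum_(k < m) u k 0 * v k 0.

Definition unitvec (v : 'cV[R]_m) : Prop := \sum_(k < m) v k 0 ^+ 2 = 1.

Definition sqnorm2 (v : 'cV[R]_n) : R := \sum_(i < n) v i 0 ^+ 2.

Definition Rl1 (v : 'cV[R]_n) : R := \sum_(i < n) `|v i 0|.
Definition linf (v : 'cV[R]_n) : R := \big[Num.max/0]_(i < n) `|v i 0|.
Definition rsmall (v : 'cV[R]_n) : R := 2 * linf v - Rl1 v.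

Definition profit (alpha : R) (beta : 'cV[R]_m) (gamma : 'cV[R]_n)
  (A : 'M[R]_(m, n)) (q : 'cV[R]_n) (i : 'I_n) : R :=
  alpha * q i 0 * dotc (col i A) (beta - \sum_(j < n | j != i) q j 0 *: col j A)
  - (1 + alpha) * q i 0 ^+ 2 + gamma i 0 * q i 0.

Definition objective (K : 'I_n -> 'I_n -> R) (alpha : R) (beta : 'cV[R]_m)
  (gamma : 'cV[R]_n) (A : 'M[R]_(m, n)) (q : 'cV[R]_n) (i : 'I_n) : R :=
  profit alpha beta gamma A q i
  + \sum_(j < n | j != i) K i j * profit alpha beta gamma A q j.

Definition devA (A : 'M[R]_(m, n)) (i : 'I_n) (a : 'cV[R]_m) : 'M[R]_(m, n) :=
  \matrix_(k < m, j < n) (if j == i then a k 0 else A k j).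
Definition devq (q : 'cV[R]_n) (i : 'I_n) (x : R) : 'cV[R]_n :=
  \col_(j < n) (if j == i then x else q j 0).

Definition feasible (A : 'M[R]_(m, n)) (q : 'cV[R]_n) : Prop :=
  (forall i : 'I_n, unitvec (col i A)) /\ (forall i : 'I_n, 0 <= q i 0).

Definition equilibrium (K : 'I_n -> 'I_n -> R) (alpha : R) (beta : 'cV[R]_m)
  (gamma : 'cV[R]_n) (A : 'M[R]_(m, n)) (q : 'cV[R]_n) : Prop :=
  feasible A q /\
  forall (i : 'I_n) (a : 'cV[R]_m) (x : R), unitvec a -> 0 <= x ->
    objective K alpha beta gamma (devA A i a) (devq q i x) i
    <= objective K alpha beta gamma A q i.

Definition sbar (gamma : 'cV[R]_n) (A : 'M[R]_(m, n)) : R :=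
  ('C(n, 2)%:R)^-1 *
  \sum_(i < n) \sum_(j < n | (i < j)%N) gamma i 0 * gamma j 0 * dotc (col i A) (col j A).

End Game.

(* Main.v *)
Require Import Defs.
From HB Require Import structures.
From mathcomp Require Import all_boot all_order all_algebra.
From mathcomp Require Import reals ring lra zify.
Import Order.TTheory GRing.Theory Num.Theory.
Local Open Scope ring_scope.

Lemma dotcC {R : realType} {m : nat} (u v : 'cV[R]_m) : dotc u v = dotc v u.
Proof. by rewrite /dotc; apply: eq_bigr => k _; rewrite mulrC. Qed.

Lemma dotcDr {R : realType} {m : nat} (u v w : 'cV[R]_m) : dotc u (v + w) = dotc u v + dotc u w.
Proof. by rewrite /dotc -big_split; apply: eq_bigr => k _; rewrite mxE mulrDr. Qed.

Lemma dotcNr {R : realType} {m : nat} (u v : 'cV[R]_m) : dotc u (- v) = - dotc u v.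
Proof. by rewrite /dotc -sumrN; apply: eq_bigr => k _; rewrite mxE mulrN. Qed.

Lemma dotcBr {R : realType} {m : nat} (u v w : 'cV[R]_m) : dotc u (v - w) = dotc u v - dotc u w.
Proof. by rewrite dotcDr dotcNr. Qed.

Lemma dotcZr {R : realType} {m : nat} (u v : 'cV[R]_m) c : dotc u (c *: v) = c * dotc u v.
Proof. by rewrite /dotc mulr_sumr; apply: eq_bigr => k _; rewrite mxE mulrCA. Qed.

Lemma dotc0r {R : realType} {m : nat} (u : 'cV[R]_m) : dotc u 0 = 0.
Proof. by rewrite /dotc big1 // => k _; rewrite mxE mulr0. Qed.

Lemma dotc_sumr {R : realType} {m : nat} (u : 'cV[R]_m) (I : Type) (r : seq I) (P : pred I) (F : I -> 'cV[R]_m) :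
  dotc u (\sum_(j <- r | P j) F j) = \sum_(j <- r | P j) dotc u (F j).
Proof. by apply: big_morph; [exact: dotcDr | exact: dotc0r]. Qed.

Lemma dotcDl {R : realType} {m : nat} (u v w : 'cV[R]_m) : dotc (v + w) u = dotc v u + dotc w u.
Proof. by rewrite !(dotcC _ u) dotcDr. Qed.
Lemma dotcZl {R : realType} {m : nat} (u v : 'cV[R]_m) c : dotc (c *: v) u = c * dotc v u.
Proof. by rewrite !(dotcC _ u) dotcZr. Qed.
Lemma dotc_suml {R : realType} {m : nat} (u : 'cV[R]_m) (I : Type) (r : seq I) (P : pred I) (F : I -> 'cV[R]_m) :
  dotc (\sum_(j <- r | P j) F j) u = \sum_(j <- r | P j) dotc (F j) u.
Proof. by rewrite dotcC dotc_sumr; apply: eq_bigr => j _; rewrite dotcC. Qed.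

Lemma dotcNl {R : realType} {m : nat} (u v : 'cV[R]_m) : dotc (- v) u = - dotc v u.
Proof. by rewrite !(dotcC _ u) dotcNr. Qed.

Lemma dotc_ge0 {R : realType} {m : nat} (u : 'cV[R]_m) : 0 <= dotc u u.
Proof. by apply: sumr_ge0 => k _; rewrite -expr2 sqr_ge0. Qed.

Lemma dotc_unit {R : realType} {m : nat} (u : 'cV[R]_m) : unitvec u -> dotc u u = 1.
Proof. by rewrite /unitvec /dotc => <-; apply: eq_bigr => k _; rewrite expr2. Qed.

Lemma dotc_bound {R : realType} {m : nat} (u v : 'cV[R]_m) : unitvec u -> unitvec v ->
  -1 <= dotc u v <= 1.
Proof.
move=> hu hv.
have e1 : dotc (u - v) (u - v) = 2 - 2 * dotc u v.
  rewrite dotcBr !dotcDl !dotcNl dotc_unit // dotc_unit // (dotcC v u); ring.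
have e2 : dotc (u + v) (u + v) = 2 + 2 * dotc u v.
  rewrite dotcDr !dotcDl dotc_unit // dotc_unit // (dotcC v u); ring.
have := dotc_ge0 (u - v); have := dotc_ge0 (u + v); rewrite e1 e2 => h1 h2.
apply/andP; split; lra.
Qed.


Definition Sm {R : realType} {m n : nat} (A : 'M[R]_(m,n)) (q : 'cV[R]_n) (i : 'I_n) : 'cV[R]_m :=
  \sum_(j < n | j != i) q j 0 *: col j A.
Definition vv {R : realType} {m n : nat} (kappa : R) (beta : 'cV[R]_m) (A : 'M[R]_(m,n)) (q : 'cV[R]_n) i :=
  beta - (1 + kappa) *: Sm A q i.
Definition gg {R : realType} {m n : nat} (alpha kappa : R) (beta : 'cV[R]_m) (gamma : 'cV[R]_n)
  (A : 'M[R]_(m,n)) (q : 'cV[R]_n) i (a : 'cV[R]_m) (x : R) :=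
  alpha * x * dotc a (vv kappa beta A q i) - (1 + alpha) * x ^+ 2 + gamma i 0 * x.
Definition HH {R : realType} {m n : nat} (alpha kappa : R) (beta : 'cV[R]_m) (gamma : 'cV[R]_n)
  (A : 'M[R]_(m,n)) (q : 'cV[R]_n) (i : 'I_n) :=
  \sum_(j < n | j != i) kappa * (alpha * q j 0 * dotc (col j A)
      (beta - \sum_(k < n | (k != j) && (k != i)) q k 0 *: col k A)
     - (1 + alpha) * q j 0 ^+ 2 + gamma j 0 * q j 0).

Lemma col_devA {R : realType} {m n : nat} (A : 'M[R]_(m,n)) i a j :
  col j (devA A i a) = if j == i then a else col j A.
Proof. apply/matrixP => k l; rewrite (ord1 l) !mxE. by case: (j == i); rewrite ?mxE. Qed.

Lemma devq_E {R : realType} {n : nat} (q : 'cV[R]_n) i x j :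
  devq q i x j 0 = if j == i then x else q j 0.
Proof. by rewrite mxE. Qed.

Lemma devA_id {R : realType} {m n : nat} (A : 'M[R]_(m,n)) i : devA A i (col i A) = A.
Proof. apply/matrixP => k j; rewrite !mxE; by case: eqP => // ->. Qed.

Lemma devq_id {R : realType} {n : nat} (q : 'cV[R]_n) i : devq q i (q i 0) = q.
Proof. apply/matrixP => k l; rewrite (ord1 l) !mxE; by case: eqP => // ->. Qed.

Lemma aux_dot {R : realType} {m : nat} (u b a S : 'cV[R]_m) x :
  dotc u (b - (x *: a + S)) = dotc u (b - S) - x * dotc a u.
Proof. by rewrite !dotcBr dotcDr dotcZr (dotcC u a); ring. Qed.

Lemma objD {R : realType} {m n : nat} (K : 'I_n -> 'I_n -> R) (alpha kappa : R) (beta : 'cV[R]_m)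
  (gamma : 'cV[R]_n) (A : 'M[R]_(m,n)) (q : 'cV[R]_n) (i : 'I_n) a x :
  (forall j, j != i -> K i j = kappa) ->
  objective K alpha beta gamma (devA A i a) (devq q i x) i =
  gg alpha kappa beta gamma A q i a x + HH alpha kappa beta gamma A q i.
Proof.
move=> hK.
rewrite /objective /profit /gg /HH /vv /Sm col_devA !devq_E eqxx.
have e1 : \sum_(j < n | j != i) devq q i x j 0 *: col j (devA A i a) =
          \sum_(j < n | j != i) q j 0 *: col j A.
  by apply: eq_bigr => j /negbTE hj; rewrite col_devA devq_E hj.
rewrite e1.
have e2 : \sum_(j < n | j != i) K i j * (alpha * devq q i x j 0 *
     dotc (col j (devA A i a)) (beta - \sum_(k < n | k != j) devq q i x k 0 *: col k (devA A i a))
     - (1 + alpha) * devq q i x j 0 ^+ 2 + gamma j 0 * devq q i x j 0) =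
   \sum_(j < n | j != i) (kappa * (alpha * q j 0 * dotc (col j A)
      (beta - \sum_(k < n | (k != j) && (k != i)) q k 0 *: col k A)
     - (1 + alpha) * q j 0 ^+ 2 + gamma j 0 * q j 0)
     - kappa * alpha * x * (q j 0 * dotc a (col j A))).
  apply: eq_bigr => j hj.
  rewrite hK // col_devA !devq_E (negbTE hj) (bigD1 i) /=; last by rewrite eq_sym.
  rewrite col_devA devq_E eqxx.
  have -> : \sum_(k < n | (k != j) && (k != i)) devq q i x k 0 *: col k (devA A i a) =
            \sum_(k < n | (k != j) && (k != i)) q k 0 *: col k A.
    by apply: eq_bigr => k /andP[_ /negbTE hk]; rewrite col_devA devq_E hk.
  rewrite aux_dot; ring.
have e3 : \sum_(j < n | j != i) kappa * alpha * x * (q j 0 * dotc a (col j A)) =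
   kappa * alpha * x * \sum_(j < n | j != i) q j 0 * dotc a (col j A) by rewrite mulr_sumr.
rewrite e2 sumrB e3 !dotcBr dotcZr !dotc_sumr.
have -> : \sum_(j < n | j != i) dotc a (q j 0 *: col j A) = \sum_(j < n | j != i) q j 0 * dotc a (col j A).
  by apply: eq_bigr => j _; rewrite dotcZr.
ring.
Qed.


Lemma unitvecE {R : realType} {m : nat} (u : 'cV[R]_m) : unitvec u <-> dotc u u = 1.
Proof.
rewrite /unitvec /dotc; have -> : \sum_(k < m) u k 0 ^+ 2 = \sum_(k < m) u k 0 * u k 0.
  by apply: eq_bigr => k _; rewrite expr2.
by [].
Qed.

Lemma dotc_eq0 {R : realType} {m : nat} {u : 'cV[R]_m} : dotc u u = 0 -> u = 0.
Proof.
move=> h; apply/matrixP => k l; rewrite (ord1 l) mxE.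
have /psumr_eq0P h2 : \sum_(k < m) u k 0 * u k 0 = 0 := h.
have : u k 0 * u k 0 = 0 by apply: (h2 _ k) => // j _; rewrite -expr2 sqr_ge0.
by move/eqP; rewrite mulf_eq0 orbb => /eqP.
Qed.

Lemma unit_neq0 {R : realType} {m : nat} (u : 'cV[R]_m) : unitvec u -> u != 0.
Proof.
move=> /unitvecE h; apply/eqP => h0; move: h; rewrite h0 dotc0r => /eqP.
by rewrite eq_sym oner_eq0.
Qed.

Lemma unitvecN {R : realType} {m : nat} {u : 'cV[R]_m} : unitvec u -> unitvec (- u).
Proof. by rewrite !unitvecE dotcNl dotcNr opprK. Qed.

Lemma br_pure {R : realType} {m : nat} (ai v : 'cV[R]_m) (alpha g qi : R) :
  unitvec ai -> 0 < alpha -> 0 < g -> 0 <= qi ->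
  (forall a x, unitvec a -> 0 <= x ->
     alpha * x * dotc a v - (1 + alpha) * x ^+ 2 + g * x <=
     alpha * qi * dotc ai v - (1 + alpha) * qi ^+ 2 + g * qi) ->
  [/\ 0 < qi, 0 <= dotc ai v, v = dotc ai v *: ai &
      2 * (1 + alpha) * qi = alpha * dotc ai v + g].
Proof.
move=> uai ha hg hq H.
set p := dotc ai v.
have qpos : 0 < qi.
  rewrite lt_def hq andbT; apply/eqP => q0.
  have [a [ua da]] : exists a : 'cV[R]_m, unitvec a /\ 0 <= dotc a v.
    case: (lerP 0 p) => hp; first by exists ai.
    exists (- ai); split; first exact: unitvecN.
    by rewrite dotcNl /= -/p; lra.
  set x := g / (2 * (1 + alpha)).
  have hx : (1 + alpha) * x = g / 2 by rewrite /x; field; lra.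
  have x0 : 0 < x by rewrite /x divr_gt0 //; lra.
  have := H a x ua (ltW x0); rewrite q0.
  have -> : (1 + alpha) * x ^+ 2 = x * (g / 2) by rewrite -hx; ring.
  have := mulr_ge0 (mulr_ge0 (ltW ha) (ltW x0)) da; have := mulr_gt0 hg x0.
  lra.
have hb : forall b, unitvec b -> dotc b v <= p.
  move=> b ub; have := H b qi ub hq.
  have aq : 0 < alpha * qi by rewrite mulr_gt0.
  move=> h; have : alpha * qi * dotc b v <= alpha * qi * p by rewrite /p; lra.
  by rewrite ler_pM2l.
have p0 : 0 <= p.
  have := hb _ (unitvecN uai); rewrite dotcNl -/p; lra.
have vpar : v = p *: ai.
  have [v0|vn0] := eqVneq (dotc v v) 0.
    by rewrite /p (dotc_eq0 v0) dotc0r scale0r.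
  have vpos : 0 < dotc v v by rewrite lt_def vn0 dotc_ge0.
  set s := Num.sqrt (dotc v v).
  have s0 : 0 < s by rewrite sqrtr_gt0.
  have ss : s ^+ 2 = dotc v v by rewrite sqr_sqrtr // ltW.
  have ub : unitvec (s^-1 *: v).
    apply/unitvecE; rewrite dotcZl dotcZr -ss; field; lra.
  have := hb _ ub; rewrite dotcZl -ss => hs.
  have sp : s <= p.
    have : s ^-1 * s ^+ 2 = s by field; lra.
    lra.
  apply/eqP; rewrite -subr_eq0; apply/eqP; apply: dotc_eq0.
  have e : dotc (v - p *: ai) (v - p *: ai) = dotc v v - p ^+ 2.
    rewrite dotcBr !dotcDl !dotcNl !dotcZl !dotcZr (dotcC v ai) (dotc_unit ai uai) -/p; ring.
  apply/eqP; rewrite eq_le dotc_ge0 andbT e -ss.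
  have : s * s <= p * p by apply: ler_pM; lra.
  rewrite !expr2; lra.
split => //.
have hx := H ai _ uai.
set xs := (alpha * p + g) / (2 * (1 + alpha)).
have xs0 : 0 <= xs by rewrite /xs divr_ge0 //; nra.
have := hx xs xs0; rewrite -/p => h.
have hxs : 2 * (1 + alpha) * xs = alpha * p + g by rewrite /xs; field; lra.
have : (1 + alpha) * (xs - qi) ^+ 2 <= 0.
  have -> : (1 + alpha) * (xs - qi) ^+ 2 =
     (alpha * xs * p - (1 + alpha) * xs ^+ 2 + g * xs) - (alpha * qi * p - (1 + alpha) * qi ^+ 2 + g * qi)
     - 0.
    have eg : g = 2 * (1 + alpha) * xs - alpha * p by lra.
    rewrite eg; ring.
  lra.
move=> h2.
have h3 : (xs - qi) ^+ 2 = 0.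
  apply/eqP; rewrite eq_le sqr_ge0 andbT.
  have : 0 < 1 + alpha by lra.
  move=> h4; rewrite -(pmulr_rle0 _ h4); exact: h2.
move: h3 => /eqP; rewrite sqrf_eq0 subr_eq0 => /eqP h5.
rewrite -hxs h5 //.
Qed.


Lemma mulmx_sum {R : realType} {m n : nat} (A : 'M[R]_(m,n)) (q : 'cV[R]_n) :
  A *m q = \sum_(j < n) q j 0 *: col j A.
Proof.
apply/matrixP => k l; rewrite (ord1 l) !mxE summxE; apply: eq_bigr => j _.
by rewrite !mxE mulrC.
Qed.

Lemma Sm_split {R : realType} {m n : nat} (A : 'M[R]_(m,n)) (q : 'cV[R]_n) i :
  A *m q = q i 0 *: col i A + Sm A q i.
Proof. by rewrite mulmx_sum (bigD1 i). Qed.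

Lemma eq_br {R : realType} {m n : nat} (K : 'I_n -> 'I_n -> R) (alpha kappa : R) (beta : 'cV[R]_m)
  (gamma : 'cV[R]_n) (A : 'M[R]_(m,n)) (q : 'cV[R]_n) (i : 'I_n) :
  0 < alpha -> (forall i, 0 < gamma i 0) -> (forall i j, i != j -> K i j = kappa) ->
  equilibrium K alpha beta gamma A q ->
  [/\ 0 < q i 0, 0 <= dotc (col i A) (vv kappa beta A q i),
      vv kappa beta A q i = dotc (col i A) (vv kappa beta A q i) *: col i A &
      2 * (1 + alpha) * q i 0 = alpha * dotc (col i A) (vv kappa beta A q i) + gamma i 0].
Proof.
move=> ha hg hK [[hu hq] heq].
apply: br_pure => // a x ua hx.
have := heq i a x ua hx.
rewrite (objD K _ kappa); last by move=> j hj; apply: hK; rewrite eq_sym.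
have -> : objective K alpha beta gamma A q i = gg alpha kappa beta gamma A q i (col i A) (q i 0)
   + HH alpha kappa beta gamma A q i.
  rewrite -(objD K _ kappa); last by move=> j hj; apply: hK; rewrite eq_sym.
  by rewrite devA_id devq_id.
rewrite /gg; lra.
Qed.


Lemma dsum {R : realType} {n : nat} (F : 'I_n -> 'I_n -> R) : (forall i j, F i j = F j i) ->
  \sum_(i < n) \sum_(j < n) F i j = \sum_(i < n) F i i + 2 * \sum_(i < n) \sum_(j < n | (i < j)%N) F i j.
Proof.
move=> hF.
have e1 (i : 'I_n) : \sum_(j < n) F i j = F i i + \sum_(j < n | (i < j)%N) F i j + \sum_(j < n | (j < i)%N) F i j.
  rewrite (bigD1 i) //= (bigID (fun j : 'I_n => (i < j)%N)) /= addrA.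
  congr (_ + _ + _); apply: eq_bigl => j.
    apply/andb_idl => h; apply/eqP => e; move: h; rewrite e ltnn //.
  by rewrite -leqNgt ltn_neqAle.
rewrite (eq_bigr _ (fun i _ => e1 i)) !big_split /=.
have -> : \sum_(i < n) \sum_(j < n | (j < i)%N) F i j = \sum_(i < n) \sum_(j < n | (i < j)%N) F i j.
  under eq_bigr do rewrite big_mkcond /=.
  rewrite exchange_big /=; apply: eq_bigr => j _.
  rewrite [RHS]big_mkcond; apply: eq_bigr => i _; by rewrite hF.
ring.
Qed.

Lemma bin2_nat n : ('C(n, 2) * 2 = n * (n - 1))%N.
Proof.
elim: n => // n IH; rewrite binS bin1 mulnDl IH; nia.
Qed.


Lemma sbar_val {R : realType} {m n : nat} (beta : 'cV[R]_m) (gamma : 'cV[R]_n)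
  (A : 'M[R]_(m,n)) (q : 'cV[R]_n) (D ck : R) :
  (2 <= n)%N -> unitvec beta -> (forall i, unitvec (col i A)) ->
  A *m q = ck^-1 *: beta -> q = D^-1 *: gamma -> ck != 0 -> D != 0 ->
  sbar gamma A = ((D / ck) ^+ 2 - sqnorm2 gamma) / (n%:R * (n%:R - 1)).
Proof.
move=> hn ub hu hAq hq hck hD.
have hg i : gamma i 0 = D * q i 0 by rewrite hq mxE mulrA mulfV // mul1r.
set T := \sum_(i < n) \sum_(j < n | (i < j)%N) q i 0 * q j 0 * dotc (col i A) (col j A).
set Q := \sum_(i < n) q i 0 ^+ 2.
have e1 : dotc (A *m q) (A *m q) = ck ^-1 ^+ 2.
  by rewrite hAq dotcZl dotcZr dotc_unit // mulr1 expr2.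
have e2 : dotc (A *m q) (A *m q) = Q + 2 * T.
  rewrite mulmx_sum dotc_suml.
  transitivity (\sum_(i < n) \sum_(j < n) q i 0 * q j 0 * dotc (col i A) (col j A)).
    apply: eq_bigr => i _; rewrite dotcZl dotc_sumr mulr_sumr; apply: eq_bigr => j _.
    by rewrite dotcZr; ring.
  rewrite dsum; last by move=> i j; rewrite dotcC; ring.
  congr (_ + _); apply: eq_bigr => i _; rewrite dotc_unit // mulr1 expr2 //.
have hsq : sqnorm2 gamma = D ^+ 2 * Q.
  rewrite /sqnorm2 /Q mulr_sumr; apply: eq_bigr => i _; rewrite hg; ring.
have hsb : sbar gamma A = ('C(n, 2)%:R)^-1 * (D ^+ 2 * T).
  rewrite /sbar; congr (_ * _); rewrite /T mulr_sumr; apply: eq_bigr => i _.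
  rewrite mulr_sumr; apply: eq_bigr => j _; rewrite !hg; ring.
have hC : ('C(n, 2)%:R : R) = n%:R * (n%:R - 1) / 2.
  have := congr1 (fun k => k%:R : R) (bin2_nat n).
  rewrite /= !natrM natrB; last by lia.
  by move=> h; rewrite -h; field.
have hn2 : (2 : R) <= n%:R by rewrite (ler_nat R 2 n).
have hQ : Q = ck ^-1 ^+ 2 - 2 * T by rewrite -e1 e2; ring.
rewrite hsb hC hsq hQ; field.
apply/and3P; split => //; apply/eqP; lra.
Qed.


Lemma part1 {R : realType} {m n : nat} (K : 'I_n -> 'I_n -> R) (alpha kappa : R) (beta : 'cV[R]_m)
  (gamma : 'cV[R]_n) (A : 'M[R]_(m,n)) (q : 'cV[R]_n) :
  (2 <= n)%N -> 0 < alpha -> unitvec beta -> (forall i, 0 < gamma i 0) ->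
  (forall i j, i != j -> K i j = kappa) -> 0 <= kappa -> 0 < 2 + alpha * (1 - kappa) ->
  equilibrium K alpha beta gamma A q -> (2 <= \rank A)%N ->
  [/\ A *m q = (1 + kappa)^-1 *: beta,
      q = (2 + alpha * (1 - kappa))^-1 *: gamma &
      sbar gamma A = (((2 + alpha * (1 - kappa)) / (1 + kappa)) ^+ 2 - sqnorm2 gamma)
                     / (n%:R * (n%:R - 1))].
Proof.
move=> hn ha ub hg hK hk hD heq hr.
have br i := eq_br K alpha kappa beta gamma A q i ha hg hK heq.
have hu := heq.1.1.
pose w := beta - (1 + kappa) *: (A *m q).
pose c i := dotc (col i A) (vv kappa beta A q i) - (1 + kappa) * q i 0.
have hw i : w = c i *: col i A.
  case: (br i) => _ _ hv _.
  have -> : w = vv kappa beta A q i - ((1 + kappa) * q i 0) *: col i A.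
    by rewrite /w /vv (Sm_split A q i) scalerDr scalerA opprD addrA addrAC.
  by rewrite {1}hv -scalerBl.
have w0 : w = 0.
  case: (eqVneq w 0) => // wn0.
  have cn0 i : c i != 0.
    by apply/eqP => ci; move: wn0; rewrite (hw i) ci scale0r eqxx.
  have hA : A = w *m \row_j (c j)^-1.
    apply/matrixP => k j; rewrite (hw j) !mxE big_ord1 !mxE.
    by field; apply: cn0.
  have h1 := mxrankM_maxl w (\row_j (c j)^-1).
  have h2 := rank_leq_col w.
  rewrite -hA in h1; by have := leq_trans (leq_trans hr h1) h2.
have hk1 : 1 + kappa != 0 by apply/eqP; lra.
have hAq : A *m q = (1 + kappa)^-1 *: beta.
  have : beta = (1 + kappa) *: (A *m q).
    by apply/eqP; rewrite -subr_eq0; apply/eqP; exact: w0.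
  by move=> ->; rewrite scalerA mulVf // scale1r.
have hq : q = (2 + alpha * (1 - kappa))^-1 *: gamma.
  apply/matrixP => i l; rewrite (ord1 l) mxE.
  case: (br i) => qpos _ _ hqi.
  have ci0 : c i = 0.
    have := hw i; rewrite w0 => /esym/eqP; rewrite scaler_eq0 (negbTE (unit_neq0 _ (hu i))) orbF.
    by move/eqP.
  move: ci0; rewrite /c => /eqP; rewrite subr_eq0 => /eqP hp.
  rewrite hp in hqi.
  have hD0 : 2 + alpha * (1 - kappa) != 0 by apply/eqP; lra.
  apply: (mulfI hD0); rewrite mulrA mulfV // mul1r.
  have -> : gamma i 0 = 2 * (1 + alpha) * q i 0 - alpha * ((1 + kappa) * q i 0) by lra.
  ring.
split => //.
have hD0 : 2 + alpha * (1 - kappa) != 0 by apply/eqP; lra.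
exact: (sbar_val beta gamma A q _ _ hn ub hu hAq hq hk1 hD0).
Qed.


Lemma fwd {R : realType} {m n : nat} (beta : 'cV[R]_m) (gamma : 'cV[R]_n)
  (A : 'M[R]_(m,n)) (q : 'cV[R]_n) (D ck : R) :
  unitvec beta -> (forall i, unitvec (col i A)) -> (forall i, 0 < gamma i 0) ->
  0 < D -> 0 < ck ->
  A *m q = ck^-1 *: beta -> q = D^-1 *: gamma ->
  rsmall gamma <= D / ck <= Rl1 gamma.
Proof.
move=> ub hu hg hD hck hAq hq.
set L := D / ck.
have hs : \sum_(i < n) gamma i 0 *: col i A = L *: beta.
  have : A *m q = D^-1 *: \sum_(i < n) gamma i 0 *: col i A.
    rewrite mulmx_sum scaler_sumr; apply: eq_bigr => i _.
    by rewrite hq mxE scalerA.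
  rewrite hAq => /(congr1 (fun v => D *: v)).
  rewrite !scalerA mulfV ?scale1r; last by apply/eqP; lra.
  by move=> <-; rewrite /L mulrC.
have habs : Rl1 gamma = \sum_(i < n) gamma i 0.
  by apply: eq_bigr => i _; rewrite ger0_norm // ltW.
have L0 : 0 < L by rewrite /L divr_gt0.
have hup : L <= Rl1 gamma.
  have : dotc beta (L *: beta) = L by rewrite dotcZr dotc_unit // mulr1.
  rewrite -hs dotc_sumr habs => <-; apply: ler_sum => i _.
  rewrite dotcZr; have := dotc_bound _ _ ub (hu i); have := hg i.
  move=> h1 /andP[_ h2]; have h3 : 0 <= 1 - dotc beta (col i A) by lra.
  have := mulr_ge0 (ltW h1) h3; lra.
have hk k : 2 * gamma k 0 <= L + Rl1 gamma.
  have e : dotc (col k A) (L *: beta) = gamma k 0 +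
      \sum_(j < n | j != k) gamma j 0 * dotc (col k A) (col j A).
    rewrite -hs dotc_sumr (bigD1 k) //= dotcZr dotc_unit // mulr1; congr (_ + _).
    by apply: eq_bigr => j _; rewrite dotcZr.
  have e2 : Rl1 gamma = gamma k 0 + \sum_(j < n | j != k) gamma j 0 by rewrite habs (bigD1 k).
  have h1 : - \sum_(j < n | j != k) gamma j 0 <=
            \sum_(j < n | j != k) gamma j 0 * dotc (col k A) (col j A).
    rewrite -sumrN; apply: ler_sum => j _.
    have := dotc_bound _ _ (hu k) (hu j); have := hg j.
    move=> h1 /andP[h2 _]; have h3 : 0 <= dotc (col k A) (col j A) + 1 by lra.
    have := mulr_ge0 (ltW h1) h3; lra.
  have h2 : dotc (col k A) (L *: beta) <= L.
    rewrite dotcZr; have := dotc_bound _ _ (hu k) ub => /andP[_ h].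
    have h3 : 0 <= 1 - dotc (col k A) beta by lra.
    have := mulr_ge0 (ltW L0) h3; lra.
  lra.
apply/andP; split => //.
rewrite /rsmall.
have : linf gamma <= (L + Rl1 gamma) / 2.
  apply: bigmax_le => [|i _]; first by have := ltW L0; lra.
  rewrite ger0_norm; last exact: ltW.
  have := hk i; lra.
lra.
Qed.


Lemma tri {R : realType} (y1 y2 t g l : R) :
  0 <= t -> t ^+ 2 = y1 ^+ 2 + y2 ^+ 2 -> 0 < g -> 0 <= l ->
  t - g <= l -> g - t <= l -> l <= t + g ->
  exists a1 a2 : R, a1 ^+ 2 + a2 ^+ 2 = 1 /\ (y1 - g * a1) ^+ 2 + (y2 - g * a2) ^+ 2 = l ^+ 2.
Proof.
move=> t0 ht g0 l0 h1 h2 h3.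
have [tz|tpos] := eqVneq t 0.
  have y0 : y1 ^+ 2 + y2 ^+ 2 = 0 by rewrite -ht tz expr0n.
  have y10 : y1 = 0.
    by apply/eqP; rewrite -sqrf_eq0 eq_le sqr_ge0 andbT; have := sqr_ge0 y2; lra.
  have y20 : y2 = 0.
    by apply/eqP; rewrite -sqrf_eq0 eq_le sqr_ge0 andbT; have := sqr_ge0 y1; lra.
  have lg : l = g by rewrite tz in h2 h3; lra.
  exists 1, 0; split; first by ring.
  by rewrite y10 y20 lg; ring.
have tp : 0 < t by rewrite lt_def tpos t0.
set p := (t ^+ 2 + g ^+ 2 - l ^+ 2) / (2 * g).
have hp : 0 <= t ^+ 2 - p ^+ 2.
  have e : t ^+ 2 - p ^+ 2 = ((l ^+ 2 - (t - g) ^+ 2) * ((t + g) ^+ 2 - l ^+ 2)) / (4 * g ^+ 2).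
    rewrite /p; field; lra.
  rewrite e; apply: divr_ge0; last by have := sqr_ge0 g; lra.
  apply: mulr_ge0.
    have -> : l ^+ 2 - (t - g) ^+ 2 = (l - (t - g)) * (l + (t - g)) by ring.
    by apply: mulr_ge0; lra.
  have -> : (t + g) ^+ 2 - l ^+ 2 = (t + g - l) * (t + g + l) by ring.
  by apply: mulr_ge0; lra.
set s := Num.sqrt (t ^+ 2 - p ^+ 2).
have ss : s ^+ 2 = t ^+ 2 - p ^+ 2 by rewrite sqr_sqrtr.
have t2 : t ^+ 2 != 0 by rewrite sqrf_eq0.
exists ((p * y1 - s * y2) / t ^+ 2), ((p * y2 + s * y1) / t ^+ 2); split.
  have -> : ((p * y1 - s * y2) / t ^+ 2) ^+ 2 + ((p * y2 + s * y1) / t ^+ 2) ^+ 2 =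
     (p ^+ 2 + s ^+ 2) * (y1 ^+ 2 + y2 ^+ 2) / (t ^+ 2) ^+ 2 by field.
  by rewrite ss -ht; field.
have -> : (y1 - g * ((p * y1 - s * y2) / t ^+ 2)) ^+ 2 + (y2 - g * ((p * y2 + s * y1) / t ^+ 2)) ^+ 2
   = (y1 ^+ 2 + y2 ^+ 2) - 2 * g * p * ((y1 ^+ 2 + y2 ^+ 2) / t ^+ 2)
     + g ^+ 2 * ((p ^+ 2 + s ^+ 2) * (y1 ^+ 2 + y2 ^+ 2) / (t ^+ 2) ^+ 2) by field.
rewrite ss -ht /p; field; lra.
Qed.

Lemma le_sum_pos {R : realType} (g : nat -> R) k i : (forall j, (j < k)%N -> 0 < g j) ->
  (i < k)%N -> g i <= \sum_(j < k) g j.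
Proof.
move=> hg hi; rewrite (bigD1 (Ordinal hi)) //= lerDl.
by apply: sumr_ge0 => j _; apply: ltW; apply: hg.
Qed.

Lemma poly2 {R : realType} (g : nat -> R) k : (forall i, (i < k)%N -> 0 < g i) ->
  forall y1 y2 t : R, 0 <= t -> t ^+ 2 = y1 ^+ 2 + y2 ^+ 2 -> t <= \sum_(i < k) g i ->
  (forall i, (i < k)%N -> 2 * g i <= \sum_(i < k) g i + t) ->
  exists c s : nat -> R, [/\ forall i, (i < k)%N -> c i ^+ 2 + s i ^+ 2 = 1,
     \sum_(i < k) g i * c i = y1 & \sum_(i < k) g i * s i = y2].
Proof.
elim: k => [|k IH] hg y1 y2 t t0 ht htk hi.
  rewrite big_ord0 in htk.
  have tz : t = 0 by lra.
  have y0 : y1 ^+ 2 + y2 ^+ 2 = 0 by rewrite -ht tz expr0n.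
  have y10 : y1 = 0.
    by apply/eqP; rewrite -sqrf_eq0 eq_le sqr_ge0 andbT; have := sqr_ge0 y2; lra.
  have y20 : y2 = 0.
    by apply/eqP; rewrite -sqrf_eq0 eq_le sqr_ge0 andbT; have := sqr_ge0 y1; lra.
  by exists (fun _ => 0), (fun _ => 0); split => //; rewrite big_ord0.
have hg' i : (i < k)%N -> 0 < g i by move=> h; apply: hg; lia.
set h := \sum_(i < k) g i.
have hH : \sum_(i < k.+1) g i = h + g k by rewrite big_ord_recr.
rewrite hH in htk hi.
have gk : 0 < g k by apply: hg.
have h0 : 0 <= h by apply: sumr_ge0 => i _; apply: ltW; apply: hg'.
have hgi i : (i < k)%N -> g i <= h by move=> hik; exact: le_sum_pos.
have hk := hi k (ltnSn k).
have [l [[l0 l1 l2 l3 l4] l5]] : exists l, [/\ 0 <= l, l <= h, l <= t + g k,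
    t - g k <= l & g k - t <= l] /\ forall i, (i < k)%N -> 2 * g i <= h + l.
  case: (lerP h (t + g k)) => hl.
    exists h; split; first by split => //; lra.
    by move=> i hik; have := hgi i hik; lra.
  exists (t + g k); split; first by split => //; lra.
  by move=> i hik; have := hi i (leqW hik); lra.
have [a1 [a2 [ua ha]]] := tri y1 y2 t (g k) l t0 ht gk l0 l3 l4 l2.
have [c [s [hcs hc hs]]] := IH hg' (y1 - g k * a1) (y2 - g k * a2) l l0 (esym ha) l1 l5.
exists (fun i => if i == k then a1 else c i), (fun i => if i == k then a2 else s i); split.
- move=> i hik; case: eqP => // hne; apply: hcs; lia.
- rewrite big_ord_recr /= eqxx.
  have -> : \sum_(i < k) g i * (if (i : nat) == k then a1 else c i) = \sum_(i < k) g i * c i.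
    by apply: eq_bigr => i _; rewrite ltn_eqF.
  rewrite hc; ring.
- rewrite big_ord_recr /= eqxx.
  have -> : \sum_(i < k) g i * (if (i : nat) == k then a2 else s i) = \sum_(i < k) g i * s i.
    by apply: eq_bigr => i _; rewrite ltn_eqF.
  rewrite hs; ring.
Qed.


Definition delta {R : realType} {m : nat} (i : 'I_m) (a : R) : 'cV[R]_m :=
  \col_k (if k == i then a else 0).

Lemma dotc_delta {R : realType} {m : nat} (u : 'cV[R]_m) i a : dotc u (delta i a) = u i 0 * a.
Proof.
rewrite /dotc (bigD1 i) //= mxE eqxx big1 ?addr0 // => k /negbTE hk.
by rewrite mxE hk mulr0.
Qed.

Lemma exists_perp {R : realType} {m : nat} (beta : 'cV[R]_m) : (2 <= m)%N -> unitvec beta ->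
  exists e, unitvec e /\ dotc beta e = 0.
Proof.
case: m beta => [|[|m']] beta // hm ub.
pose i0 := (@Ordinal m'.+2 0 isT); pose i1 := (@Ordinal m'.+2 1 isT).
set b0 := beta i0 0; set b1 := beta i1 0.
have [r0|rn0] := eqVneq (b0 ^+ 2 + b1 ^+ 2) 0.
  have b00 : b0 = 0.
    by apply/eqP; rewrite -sqrf_eq0 eq_le sqr_ge0 andbT; have := sqr_ge0 b1; lra.
  exists (delta i0 1); split.
    by apply/unitvecE; rewrite dotc_delta mxE eqxx mulr1.
  by rewrite dotc_delta -/b0 b00 mul0r.
pose f := delta i0 (- b1) + delta i1 b0.
have rpos : 0 < b0 ^+ 2 + b1 ^+ 2.
  by rewrite lt_def rn0 /=; apply: addr_ge0; apply: sqr_ge0.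
set sr := Num.sqrt (b0 ^+ 2 + b1 ^+ 2).
have sr2 : sr ^+ 2 = b0 ^+ 2 + b1 ^+ 2 by rewrite sqr_sqrtr // ltW.
have sr0 : sr != 0 by rewrite sqrtr_eq0 -ltNge.
have ff : dotc f f = b0 ^+ 2 + b1 ^+ 2.
  rewrite /f dotcDr !dotc_delta !mxE /=; ring.
exists (sr^-1 *: f); split.
  apply/unitvecE; rewrite dotcZl dotcZr ff -sr2; field; exact: sr0.
by rewrite dotcZr /f dotcDr !dotc_delta -/b0 -/b1; ring.
Qed.

Lemma bwd_eq {R : realType} {m n : nat} (K : 'I_n -> 'I_n -> R) (alpha kappa : R) (beta : 'cV[R]_m)
  (gamma : 'cV[R]_n) (A : 'M[R]_(m,n)) (q : 'cV[R]_n) :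
  0 < alpha -> (forall i, 0 < gamma i 0) ->
  (forall i j, i != j -> K i j = kappa) -> 0 <= kappa -> 0 < 2 + alpha * (1 - kappa) ->
  (forall i, unitvec (col i A)) ->
  A *m q = (1 + kappa)^-1 *: beta -> q = (2 + alpha * (1 - kappa))^-1 *: gamma ->
  equilibrium K alpha beta gamma A q.
Proof.
move=> ha hg hK hk hD hu hAq hq.
set D := 2 + alpha * (1 - kappa).
have hqi i : q i 0 = D^-1 * gamma i 0 by rewrite hq mxE.
have qpos i : 0 <= q i 0 by rewrite hqi; apply: mulr_ge0; [rewrite invr_ge0; exact: ltW | apply: ltW].
split; first by split.
move=> i a x ua hx.
have hK' : forall j, j != i -> K i j = kappa by move=> j hj; apply: hK; rewrite eq_sym.
rewrite (objD K _ kappa) //.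
have -> : objective K alpha beta gamma A q i = gg alpha kappa beta gamma A q i (col i A) (q i 0)
   + HH alpha kappa beta gamma A q i.
  by rewrite -(objD K _ kappa) // devA_id devq_id.
rewrite lerD2r.
have hk1 : 1 + kappa != 0 by apply/eqP; lra.
have hS : Sm A q i = (1 + kappa)^-1 *: beta - q i 0 *: col i A.
  by rewrite -hAq (Sm_split A q i) [q i 0 *: _ + _]addrC addrK.
have hv : vv kappa beta A q i = ((1 + kappa) * q i 0) *: col i A.
  by rewrite /vv hS scalerBr scalerA mulfV // scale1r scalerA subKr.
rewrite /gg hv !dotcZr dotc_unit // mulr1.
have hgi : gamma i 0 = D * q i 0.
  by rewrite hqi mulrA mulfV ?mul1r // gt_eqF.
rewrite hgi.
have := dotc_bound _ _ ua (hu i) => /andP[_ hd].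
have qi0 := qpos i.
move: hd qi0; move: (dotc a (col i A)) (q i 0) => d qi hd qi0.
have h1 : 0 <= alpha * (1 + kappa) * qi * x * (1 - d).
  apply: mulr_ge0; last by lra.
  apply: mulr_ge0 => //; apply: mulr_ge0 => //.
  apply: mulr_ge0; lra.
have h2 : 0 <= (1 + alpha) * (x - qi) ^+ 2 by apply: mulr_ge0; [lra | apply: sqr_ge0].
have e : alpha * qi * ((1 + kappa) * qi) - (1 + alpha) * qi ^+ 2 + D * qi * qi
   - (alpha * x * ((1 + kappa) * qi * d) - (1 + alpha) * x ^+ 2 + D * qi * x)
   = alpha * (1 + kappa) * qi * x * (1 - d) + (1 + alpha) * (x - qi) ^+ 2.
  rewrite /D; ring.
lra.
Qed.

Lemma bwd_ex {R : realType} {m n : nat} (K : 'I_n -> 'I_n -> R) (alpha kappa : R) (beta : 'cV[R]_m)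
  (gamma : 'cV[R]_n) :
  (2 <= m)%N -> 0 < alpha -> unitvec beta -> (forall i, 0 < gamma i 0) ->
  (forall i j, i != j -> K i j = kappa) -> 0 <= kappa -> 0 < 2 + alpha * (1 - kappa) ->
  rsmall gamma <= (2 + alpha * (1 - kappa)) / (1 + kappa) <= Rl1 gamma ->
  exists (A : 'M[R]_(m, n)) (q : 'cV[R]_n),
      [/\ equilibrium K alpha beta gamma A q,
          A *m q = (1 + kappa)^-1 *: beta &
          q = (2 + alpha * (1 - kappa))^-1 *: gamma].
Proof.
move=> hm ha ub hg hK hk hD /andP[hr hR].
have [e [ue be]] := exists_perp beta hm ub.
pose D := 2 + alpha * (1 - kappa).
pose L := D / (1 + kappa).
have L0 : 0 < L by rewrite /L divr_gt0 //; lra.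
pose g j := if (insub j : option 'I_n) is Some i then gamma i 0 else 0.
have gE (i : 'I_n) : g i = gamma i 0 by rewrite /g valK.
have sg : \sum_(i < n) g i = Rl1 gamma.
  by apply: eq_bigr => i _; rewrite gE ger0_norm // ltW.
have gpos i : (i < n)%N -> 0 < g i by move=> hi; move: (gE (Ordinal hi)) => /= ->.
have hlinf (i : 'I_n) : gamma i 0 <= linf gamma.
  have := le_bigmax 0 (fun j : 'I_n => `|gamma j 0|) i.
  by rewrite ger0_norm // ltW.
have [c [s [hcs hc hs]]] : exists c s : nat -> R, [/\ forall i, (i < n)%N -> c i ^+ 2 + s i ^+ 2 = 1,
     \sum_(i < n) g i * c i = L & \sum_(i < n) g i * s i = 0].
  apply: (poly2 g n gpos L 0 L (ltW L0)); first by ring.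
    by rewrite sg.
  move=> i hi; move: (gE (Ordinal hi)) => /= ->; rewrite sg.
  have := hlinf (Ordinal hi); rewrite /rsmall in hr; rewrite /L /D; lra.
pose A : 'M[R]_(m, n) := \matrix_(k, j) (c j * beta k 0 + s j * e k 0).
have colA j : col j A = c j *: beta + s j *: e.
  by apply/matrixP => k l; rewrite (ord1 l) !mxE.
have hu j : unitvec (col j A).
  apply/unitvecE; rewrite colA dotcDr !dotcDl !dotcZl !dotcZr !dotc_unit // (dotcC e beta) be.
  have := hcs j (ltn_ord j); lra.
have hD0 : D != 0 by rewrite gt_eqF.
have hk1 : 1 + kappa != 0 by rewrite gt_eqF //; lra.
have hAq : A *m (D^-1 *: gamma) = (1 + kappa)^-1 *: beta.
  rewrite mulmx_sum.
  have -> : \sum_(j < n) (D^-1 *: gamma) j 0 *: col j A =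
     \sum_(j < n) ((D^-1 * (g j * c j)) *: beta + (D^-1 * (g j * s j)) *: e).
    by apply: eq_bigr => j _; rewrite colA mxE gE scalerDr !scalerA !mulrA.
  rewrite big_split /= -!scaler_suml -!mulr_sumr hc hs mulr0 scale0r addr0 /L.
  by rewrite mulrA mulVf // mul1r.
exists A, (D^-1 *: gamma); split => //.
exact: (bwd_eq K alpha kappa beta gamma A (D^-1 *: gamma)).
Qed.

Theorem proposition6 (R : realType) (n m : nat) (alpha kappa : R)
  (beta : 'cV[R]_m) (gamma : 'cV[R]_n) (K : 'I_n -> 'I_n -> R) :
  (2 <= n)%N -> (2 <= m)%N -> 0 < alpha -> unitvec beta ->
  (forall i : 'I_n, 0 < gamma i 0) ->
  (forall i : 'I_n, K i i = 1) ->
  (forall i j : 'I_n, i != j -> K i j = kappa) ->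
  0 <= kappa -> 0 < 2 + alpha * (1 - kappa) ->
  (forall (A : 'M[R]_(m, n)) (q : 'cV[R]_n),
     equilibrium K alpha beta gamma A q -> (2 <= \rank A)%N ->
     [/\ A *m q = (1 + kappa)^-1 *: beta,
         q = (2 + alpha * (1 - kappa))^-1 *: gamma &
         sbar gamma A =
           (((2 + alpha * (1 - kappa)) / (1 + kappa)) ^+ 2 - sqnorm2 gamma)
           / (n%:R * (n%:R - 1))])
  /\
  ((exists (A : 'M[R]_(m, n)) (q : 'cV[R]_n),
      [/\ equilibrium K alpha beta gamma A q,
          A *m q = (1 + kappa)^-1 *: beta &
          q = (2 + alpha * (1 - kappa))^-1 *: gamma])
   <->
   rsmall gamma <= (2 + alpha * (1 - kappa)) / (1 + kappa) <= Rl1 gamma).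
Proof.
move=> hn hm ha ub hg hKii hK hk hD.
split.
  move=> A q heq hr; exact: (part1 K alpha kappa beta gamma A q hn ha ub hg hK hk hD heq hr).
split.
  move=> [A [q [heq hAq hq]]].
  apply: (fwd beta gamma A q _ _ ub heq.1.1 hg _ _ hAq hq) => //; lra.
by move=> h; apply: bwd_ex.
Qed.
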